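(* Let $M\ge1$, $T\ge M$, $n\ge2$ be integers and $p=\frac1{M+1}$. Let $\mathbf{c}_1,\dots,\mathbf{c}_T\in\{0,1\}^n$ be random words whose $Tn$ bits are independent, each equal to $1$ with probability $p$. Let $E_{\mathrm{syn}}$ be the event that there exist $t\in\{1,\dots,T\}$, $d\in\{1,\dots,n-1\}$, a set $S\subseteq\{1,\dots,T\}\setminus\{t\}$ with $|S|=M-1$, and shifts $s_u\in\{0,\dots,n-1\}$ ($u\in S$) such that $\sigma_d(\mathbf{c}_t)\vee\bigvee_{u\in S}\sigma_{s_u}(\mathbf{c}_u)$ covers $\mathbf{c}_t$. Then \[\Pr(E_{\mathrm{syn}})\le\exp\!\Big(M\ln T+M\ln n-\tfrac{n}{M+1}\mathrm{e}^{-1}\Big).\]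
   Context: $\vee$ is componentwise Boolean OR (an empty OR is the all-zero vector). A vector $\mathbf{y}$ covers $\mathbf{z}$ if $y_i\ge z_i$ for all $i$. For $\mathbf{c}\in\{0,1\}^n$ and $s\in\{0,\dots,n-1\}$, $\sigma_s(\mathbf{c})$ is defined by $(\sigma_s(\mathbf{c}))_i=c_{i-s}$ if $i>s$ and $0$ otherwise. *)

(* Defs.v *)
From HB Require Import structures.
From mathcomp Require Import all_boot all_order all_algebra.
From mathcomp Require Import reals sequences exp.
Set Implicit Arguments. Unset Strict Implicit. Unset Printing Implicit Defensive.
Import Order.TTheory GRing.Theory Num.Theory.

(* Words in {0,1}^n, positions indexed 0..n-1 (paper: 1..n). *)
Definition word (n : nat) := {ffun 'I_n -> bool}.

Definition wbit n (c : word n) (k : nat) : bool :=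
  if insub k is Some i then c i else false.

(* sigma_s(c): (sigma_s c)_j = c_{j-s} if j >= s (0-based; paper's i > s), else 0 *)
Definition shiftw n (s : nat) (c : word n) (j : 'I_n) : bool :=
  (s <= j) && wbit c (j - s).

Definition config (T n : nat) := {ffun 'I_T -> word n}.

Definition Esyn (M T n : nat) (c : config T n) : bool :=
  [exists t : 'I_T, exists d : 'I_n, exists S : {set 'I_T},
     exists s : {ffun 'I_T -> 'I_n},
     [&& 0 < (d : nat), t \notin S, #|S| == M.-1 &
       [forall j : 'I_n,
          c t j ==> (shiftw d (c t) j || [exists u in S, shiftw (s u) (c u) j])]]].

Definition cweight (R : realType) (p : R) T n (c : config T n) : R :=
  \prod_(t : 'I_T) \prod_(i : 'I_n) (if c t i then p else 1 - p).

Definition Prob (R : realType) (p : R) T n (E : pred (config T n)) : R :=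
  \sum_(c : config T n | E c) cweight p c.

(* Main.v *)
Require Import Defs.
From HB Require Import structures.
From mathcomp Require Import all_boot all_order all_algebra.
From mathcomp Require Import reals sequences exp.
From mathcomp Require Import ring lra zify.
Import Order.TTheory GRing.Theory Num.Theory.
Local Open Scope ring_scope.
Set Implicit Arguments. Unset Strict Implicit. Unset Printing Implicit Defensive.

Definition upd T n (c : config T n) (u : 'I_T) (i : nat) (b : bool) : config T n :=
  [ffun v => if v == u then [ffun j : 'I_n => if (j : nat) == i then b else c v j] else c v].

Definition Ex (R : realType) (p : R) T n (F : config T n -> R) : R :=
  \sum_c cweight p c * F c.

Definition mu (R : realType) (p : R) (b : bool) : R := if b then p else 1 - p.

Lemma upd_id T n (c : config T n) u (o : 'I_n) : upd c u o (c u o) = c.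
Proof.
apply/ffunP => v; rewrite ffunE; case: eqP => // ->.
by apply/ffunP => j; rewrite ffunE; case: eqP => // /val_inj ->.
Qed.

Lemma upd_upd T n (c : config T n) u i b b' : upd (upd c u i b) u i b' = upd c u i b'.
Proof.
apply/ffunP => v; rewrite !ffunE; case: eqP => // ->.
apply/ffunP => j; rewrite !ffunE; case: eqP => // _; rewrite ffunE; case: eqP.
Qed.

Lemma upd_at T n (c : config T n) u (o : 'I_n) b : upd c u o b u o = b.
Proof. by rewrite /upd ffunE eqxx ffunE eqxx. Qed.

Lemma upd_other T n (c : config T n) u (o : nat) b v (j : 'I_n) :
  (v != u) || ((j : nat) != o) -> upd c u o b v j = c v j.
Proof.
rewrite /upd ffunE; case: eqP => [->|//]; rewrite /= ffunE.
by move=> h; rewrite ifF //; apply/negbTE; exact: h.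
Qed.

Definition wout (R : realType) (p : R) T n u (o : 'I_n) (c : config T n) : R :=
  \prod_(t : 'I_T) \prod_(i : 'I_n) (if (t == u) && (i == o) then 1 else mu p (c t i)).

Lemma cweight_split (R : realType) (p : R) T n u (o : 'I_n) (c : config T n) :
  cweight p c = mu p (c u o) * wout p u o c.
Proof.
rewrite /cweight /wout (bigD1 u) //= [in RHS](bigD1 u) //= (bigD1 o) //= [in RHS](bigD1 o) //=.
rewrite !eqxx /= mul1r mulrA; congr (_ * _ * _).
  by apply: eq_bigr => i /negbTE ->.
by apply: eq_bigr => t /negbTE ->; apply: eq_bigr => i _.
Qed.

Lemma wout_upd (R : realType) (p : R) T n u (o : 'I_n) (c : config T n) b :
  wout p u o (upd c u o b) = wout p u o c.
Proof.
apply: eq_bigr => t _; apply: eq_bigr => i _.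
case: ifP => // /negbT; rewrite negb_and => h.
by rewrite upd_other.
Qed.

Definition flip T n (c : config T n) u (o : 'I_n) := upd c u o (~~ c u o).

Lemma flipK T n u (o : 'I_n) : involutive (fun c : config T n => flip c u o).
Proof. by move=> c; rewrite /flip upd_upd upd_at negbK upd_id. Qed.

Lemma Ex_flip2 (R : realType) (p : R) T n u (o : 'I_n) (H : config T n -> R) :
  2 * Ex p H = \sum_c wout p u o c * (mu p (c u o) * H c + mu p (~~ c u o) * H (flip c u o)).
Proof.
rewrite mulr2n mulrDl mul1r {2}/Ex (reindex_inj (inv_inj (@flipK T n u o))) /Ex -big_split /=.
apply: eq_bigr => c _.
rewrite !(cweight_split _ u o) /flip upd_at wout_upd; ring.
Qed.

Lemma resample (R : realType) (p : R) T n u (o : 'I_n) (F : config T n -> R) :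
  Ex p F = Ex p (fun c => p * F (upd c u o true) + (1 - p) * F (upd c u o false)).
Proof.
set G := fun c => _.
apply: (@mulfI _ 2); first by rewrite pnatr_eq0.
rewrite !(Ex_flip2 _ u o); apply: eq_bigr => c _; congr (_ * _).
rewrite /G /flip !upd_upd.
by case: (c u o) (upd_id c u o) => /= ->; ring.
Qed.

Lemma upd_neq T n (c : config T n) u i b v : v != u -> upd c u i b v = c v.
Proof. by rewrite /upd ffunE => /negbTE ->. Qed.

Lemma wbitE n (w : word n) (j : 'I_n) : wbit w j = w j.
Proof. by rewrite /wbit valK. Qed.

Lemma wbit_ord n (w : word n) (i : nat) (hi : (i < n)%N) : wbit w i = w (Ordinal hi).
Proof. by rewrite -wbitE. Qed.

Lemma wbit_upd T n (c : config T n) v i b w (j : nat) :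
  (w != v) || (j != i) -> wbit (upd c v i b w) j = wbit (c w) j.
Proof.
move=> h; rewrite /wbit; case: insubP => // o _ ho; apply: upd_other; by rewrite ho.
Qed.

Lemma wbit_upd_at T n (c : config T n) v i b : (i < n)%N -> wbit (upd c v i b v) i = b.
Proof. move=> hi; rewrite (wbit_ord _ hi) /upd ffunE eqxx ffunE /=. by rewrite eqxx. Qed.

Lemma shiftw_upd T n (c : config T n) v i b w sh (j : 'I_n) :
  (w != v) || ((j : nat) != i + sh)%N -> shiftw sh (upd c v i b w) j = shiftw sh (c w) j.
Proof.
move=> h; rewrite /shiftw; case: (leqP sh j) => //= hs; apply: wbit_upd.
case/orP: h => [->//|/eqP h]; apply/orP; right; apply/eqP; lia.
Qed.

Definition indep (R : realType) T n (h : config T n -> R) u i := forall c b, h (upd c u i b) = h c.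

Lemma cweight_ge0 (R : realType) (p : R) T n (c : config T n) : 0 <= p <= 1 -> 0 <= cweight p c.
Proof.
case/andP => p0 p1; apply: prodr_ge0 => t _; apply: prodr_ge0 => i _.
case: (c t i) => //; lra.
Qed.

Lemma Ex_scal (R : realType) (p : R) T n (F : config T n -> R) a :
  Ex p (fun c => F c * a) = Ex p F * a.
Proof. by rewrite /Ex mulr_suml; apply: eq_bigr => c _; rewrite mulrA. Qed.

Lemma Ex_add (R : realType) (p : R) T n (F G : config T n -> R) :
  Ex p (fun c => F c + G c) = Ex p F + Ex p G.
Proof. by rewrite /Ex -big_split; apply: eq_bigr => c _; rewrite mulrDr. Qed.

Lemma Ex_sub (R : realType) (p : R) T n (F G : config T n -> R) :
  Ex p (fun c => F c - G c) = Ex p F - Ex p G.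
Proof. by rewrite /Ex -sumrB; apply: eq_bigr => c _; rewrite mulrBr. Qed.

Lemma Ex_ext (R : realType) (p : R) T n (F G : config T n -> R) :
  (forall c, F c = G c) -> Ex p F = Ex p G.
Proof. by move=> h; apply: eq_bigr => c _; rewrite h. Qed.

Lemma Ex_le (R : realType) (p : R) T n (F G : config T n -> R) : 0 <= p <= 1 ->
  (forall c, F c <= G c) -> Ex p F <= Ex p G.
Proof.
move=> hp h; apply: ler_sum => c _; apply: ler_wpM2l; [exact: cweight_ge0|exact: h].
Qed.

Lemma Ex_ge0 (R : realType) (p : R) T n (F : config T n -> R) : 0 <= p <= 1 ->
  (forall c, 0 <= F c) -> 0 <= Ex p F.
Proof.
move=> hp h; apply: sumr_ge0 => c _; apply: mulr_ge0; [exact: cweight_ge0|exact: h].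
Qed.

Lemma Ex1 (R : realType) (p : R) T n : Ex p (fun _ : config T n => 1) = 1.
Proof.
rewrite /Ex /cweight.
under eq_bigr do rewrite mulr1.
rewrite -(bigA_distr_bigA (fun (t : 'I_T) (w : word n) => \prod_(i : 'I_n) (if w i then p else 1 - p))).
apply: big1 => t _.
rewrite -(bigA_distr_bigA (fun (i : 'I_n) (b : bool) => if b then p else 1 - p)).
by apply: big1 => i _; rewrite big_bool /=; ring.
Qed.

Lemma Ex_factor (R : realType) (p : R) T n (h : config T n -> R) u (i : nat) (g : bool -> R) :
  (i < n)%N -> indep h u i ->
  Ex p (fun c => h c * g (wbit (c u) i)) = Ex p h * (p * g true + (1 - p) * g false).
Proof.
move=> hi hind; rewrite (resample p u (Ordinal hi)) /= -Ex_scal; apply: Ex_ext => c.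
by rewrite !hind !wbit_upd_at //; ring.
Qed.

Lemma Ex_prod (R : realType) (p : R) T n (l : seq 'I_T) (h : config T n -> R)
    (a : 'I_T -> nat) (act : 'I_T -> bool) (g : 'I_T -> bool -> R) :
  uniq l -> (forall u, u \in l -> act u -> (a u < n)%N) ->
  (forall u, u \in l -> act u -> indep h u (a u)) ->
  Ex p (fun c => h c * \prod_(u <- l) (if act u then g u (wbit (c u) (a u)) else 1)) =
  Ex p h * \prod_(u <- l) (if act u then p * g u true + (1 - p) * g u false else 1).
Proof.
elim: l h => [|u l IH] h /=.
  by move=> _ _ _; rewrite big_nil -Ex_scal; apply: Ex_ext => c; rewrite big_nil.
case/andP => ul ul' ha hind.
rewrite big_cons.
have ha' : forall v, v \in l -> act v -> (a v < n)%N by move=> v vl; apply: ha; rewrite inE vl orbT.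
case hu: (act u).
- have hind' : indep (fun c => h c * \prod_(v <- l) (if act v then g v (wbit (c v) (a v)) else 1)) u (a u).
    move=> c b /=; rewrite (hind u (mem_head _ _) hu); congr (_ * _).
    rewrite big_seq_cond [in RHS]big_seq_cond; apply: eq_bigr => v /andP [vl _].
    case: (act v) => //; rewrite upd_neq //; apply: contraNneq ul => <-; exact: vl.
  transitivity (Ex p (fun c => (h c * \prod_(v <- l) (if act v then g v (wbit (c v) (a v)) else 1)) * g u (wbit (c u) (a u)))).
    by apply: Ex_ext => c; rewrite big_cons hu; ring.
  rewrite Ex_factor //; last by apply: ha; rewrite ?mem_head.
  rewrite IH //; last by move=> v vl; apply: hind; rewrite inE vl orbT.
  ring.
- rewrite mul1r -IH //; first by apply: Ex_ext => c; rewrite big_cons hu mul1r.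
  by move=> v vl; apply: hind; rewrite inE vl orbT.
Qed.

Definition good T n (t : 'I_T) (d : nat) (S : {set 'I_T}) (s : {ffun 'I_T -> 'I_n})
  (c : config T n) (j : 'I_n) : bool :=
  c t j ==> (shiftw d (c t) j || [exists u in S, shiftw (s u) (c u) j]).

Definition Evk T n t d S s (k : nat) (c : config T n) : bool :=
  [forall j : 'I_n, ((j : nat) < k)%N ==> good t d S s c j].

Definition wgt (R : realType) (b : R) (x : bool) : R := if x then b else 1.

Definition Psi (R : realType) (b : R) T n t d S s (k : nat) (c : config T n) : R :=
  (Evk t d S s k c)%:R * \prod_(i : 'I_n | ((i : nat) < k)%N && (k < i + d)%N) wgt b (c t i).

Definition Phi (R : realType) (b : R) T n t d S s (k : nat) (c : config T n) : R :=
  (Evk t d S s k c)%:R * \prod_(i : 'I_n | ((i : nat) < k)%N && (k <= i + d)%N) wgt b (c t i).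

Lemma good_upd T n (t : 'I_T) d (S : {set 'I_T}) (s : {ffun 'I_T -> 'I_n}) (k : nat) (v : 'I_T) i b (c : config T n) (j : 'I_n) :
  (0 < d)%N -> t \notin S -> (j < k)%N -> (v = t -> k <= i)%N -> (v \in S -> k <= i + s v)%N ->
  good t d S s (upd c v i b) j = good t d S s c j.
Proof.
move=> d0 tS jk Hv Hs; rewrite /good.
have htv : (t != v) || ((j : nat) != i).
  case: (eqVneq t v) => //= htv; have := Hv (esym htv); apply/contraL => /eqP hj; lia.
rewrite upd_other // shiftw_upd; last first.
  case: (eqVneq t v) => //= htv'; have := Hv (esym htv'); apply/contraL => /eqP hj; lia.
congr (_ ==> (_ || _)); apply: eq_existsb => u; case uS: (u \in S) => //=.
rewrite shiftw_upd //; case: (eqVneq u v) => //= huv; subst u.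
have := Hs uS; apply/contraL => /eqP hj; lia.
Qed.

Lemma Evk_upd T n (t : 'I_T) d (S : {set 'I_T}) (s : {ffun 'I_T -> 'I_n}) (k : nat) (v : 'I_T) i b (c : config T n) :
  (0 < d)%N -> t \notin S -> (v = t -> k <= i)%N -> (v \in S -> k <= i + s v)%N ->
  Evk t d S s k (upd c v i b) = Evk t d S s k c.
Proof.
move=> d0 tS Hv Hs; apply: eq_forallb => j; case: (ltnP j k) => //= jk.
exact: (@good_upd T n t d S s k v i b c j d0 tS jk Hv Hs).
Qed.

Lemma Psi_upd (R : realType) (bb : R) T n (t : 'I_T) d (S : {set 'I_T}) (s : {ffun 'I_T -> 'I_n}) (k : nat) (v : 'I_T) i b (c : config T n) :
  (0 < d)%N -> t \notin S -> (v = t -> k <= i)%N -> (v \in S -> k <= i + s v)%N ->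
  Psi bb t d S s k (upd c v i b) = Psi bb t d S s k c.
Proof.
move=> d0 tS Hv Hs; rewrite /Psi Evk_upd //; congr (_ * _).
apply: eq_bigr => j /andP [jk _]; rewrite upd_other //.
case: (eqVneq t v) => //= htv; have := Hv (esym htv); apply/contraL => /eqP hj; lia.
Qed.

Lemma Y_upd T n (t : 'I_T) d (k : 'I_n) (v : 'I_T) i b (c : config T n) :
  (0 < d)%N -> (v = t -> k <= i)%N ->
  shiftw d (upd c v i b t) k = shiftw d (c t) k.
Proof.
move=> d0 Hv; rewrite shiftw_upd //.
case: (eqVneq t v) => //= htv; have := Hv (esym htv); apply/contraL => /eqP hj; lia.
Qed.

Lemma Phi_Psi (R : realType) (b : R) T n (t : 'I_T) d (S : {set 'I_T}) (s : {ffun 'I_T -> 'I_n})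
  (k : 'I_n) (c : config T n) : (0 < d)%N ->
  Phi b t d S s k c = Psi b t d S s k c * wgt b (shiftw d (c t) k).
Proof.
move=> d0; rewrite /Phi /Psi -mulrA; congr (_ * _).
rewrite (bigID (fun i : 'I_n => (i + d == k)%N)) /= mulrC; congr (_ * _).
  apply: eq_bigl => i; apply/idP/idP.
    by case/andP => /andP [h1 h2] h3; apply/andP; split => //; lia.
  by case/andP => h1 h2; apply/andP; split; [apply/andP; split|]; lia.
rewrite /shiftw; case: (leqP d k) => dk /=.
  have hi0 : (k - d < n)%N by have := ltn_ord k; lia.
  rewrite (big_pred1 (Ordinal hi0)); first by rewrite (wbit_ord _ hi0).
  move=> i /=; apply/idP/idP.
    by case/andP => /andP [h1 h2] /eqP h3; apply/eqP; apply: val_inj => /=; lia.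
  move/eqP => -> /=; apply/andP; split; first (apply/andP; split); lia.
rewrite big_pred0 // => i; apply/negP => /andP [_ /eqP h]; lia.
Qed.

Lemma Evk_S T n (t : 'I_T) d (S : {set 'I_T}) (s : {ffun 'I_T -> 'I_n})
  (k : 'I_n) (c : config T n) :
  Evk t d S s k.+1 c = Evk t d S s k c && good t d S s c k.
Proof.
apply/idP/idP.
  move/forallP => h; apply/andP; split; last by have := h k; rewrite ltnSn.
  by apply/forallP => j; apply/implyP => jk; have := h j; rewrite ltnS (ltnW jk).
case/andP => /forallP h hk; apply/forallP => j; apply/implyP; rewrite ltnS leq_eqVlt.
case/orP => [/eqP hj|jk]; first by have -> : j = k by apply: val_inj.
by have := h j; rewrite jk.
Qed.

Lemma natr_andb (R : realType) (a b : bool) : ((a && b)%:R : R) = a%:R * b%:R.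
Proof. by case: a; case: b => /=; rewrite ?mulr1 ?mulr0 ?mul0r. Qed.

Lemma Phi_S (R : realType) (b : R) T n (t : 'I_T) d (S : {set 'I_T}) (s : {ffun 'I_T -> 'I_n})
  (k : 'I_n) (c : config T n) : (0 < d)%N ->
  Phi b t d S s k.+1 c = Psi b t d S s k c * (good t d S s c k)%:R * wgt b (c t k).
Proof.
move=> d0; rewrite /Phi /Psi Evk_S natr_andb -!mulrA; congr (_ * _).
rewrite (bigD1 k) /=; last by apply/andP; split; lia.
rewrite (eq_bigl (fun i : 'I_n => (i < k)%N && (k < i + d)%N)); first ring.
move=> i /=; apply/idP/idP.
  case/andP => /andP [h1 h2] h3; apply/andP; split; last lia.
  by have : (i : nat) != k by []; lia.
case/andP => h1 h2; apply/andP; split; first (apply/andP; split); try lia.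
by apply/eqP => h; subst i; lia.
Qed.

Lemma Zprod (R : realType) T n (S : {set 'I_T}) (s : {ffun 'I_T -> 'I_n}) (k : 'I_n) (c : config T n) :
  ((~~ [exists u in S, shiftw (s u) (c u) k])%:R : R) =
  \prod_(u <- enum S) (if (s u <= k)%N then ((~~ wbit (c u) (k - s u))%:R) else 1).
Proof.
rewrite big_enum; case: existsP => [[u /andP [uS hu]]|h] /=.
  rewrite (bigD1 u) //=; move: hu; rewrite /shiftw; case: (s u <= k)%N => //= ->.
  by rewrite mul0r.
rewrite big1 // => u uS; case hs: (s u <= k)%N => //.
case hw: (wbit (c u) (k - s u)) => //; exfalso; apply: h; exists u.
by rewrite uS /shiftw hs hw.
Qed.

Lemma step (R : realType) (p b lam : R) T n (t : 'I_T) d (S : {set 'I_T}) (s : {ffun 'I_T -> 'I_n})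
  (k : 'I_n) : 0 <= p <= 1 -> 0 <= b -> (0 < d)%N -> t \notin S ->
  p * b + (1 - p) <= lam * b -> p * b + (1 - p) - b * p * (1 - p) ^+ #|S| <= lam ->
  Ex p (Phi b t d S s k.+1) <= lam * Ex p (Phi b t d S s k).
Proof.
move=> hp b0 d0 tS h1 h2.
set Y := fun c : config T n => shiftw d (c t) k.
set PY := fun c => Psi b t d S s k c * (Y c)%:R.
set PN := fun c => Psi b t d S s k c * (~~ Y c)%:R.
set Z := fun c : config T n => \prod_(u <- enum S) (if (s u <= k)%N then ((~~ wbit (c u) (k - s u))%:R : R) else 1).
have E1 : Ex p (Phi b t d S s k) = Ex p PY * b + Ex p PN.
  rewrite -Ex_scal -Ex_add; apply: Ex_ext => c.
  rewrite Phi_Psi // /PY /PN /wgt -/(Y c); case: (Y c) => /=; ring.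
have E2 : Ex p (Phi b t d S s k.+1) =
   Ex p (fun c => PY c * wgt b (wbit (c t) k)) + Ex p (fun c => PN c * wgt b (wbit (c t) k))
   - Ex p (fun c => (PN c * Z c) * (wbit (c t) k)%:R) * b.
  rewrite -Ex_scal -Ex_add -Ex_sub; apply: Ex_ext => c.
  rewrite Phi_S // /PY /PN /Z -Zprod wbitE /good -/(Y c).
  case: (Y c); case: (c t k); case: [exists u in S, shiftw (s u) (c u) k]; rewrite /wgt /=; ring.
have indPsi : forall (v : 'I_T) i, (v = t -> k <= i)%N -> (v \in S -> k <= i + s v)%N ->
    forall c bb, Psi b t d S s k (upd c v i bb) = Psi b t d S s k c /\ Y (upd c v i bb) = Y c.
  by move=> v i Hv Hs c bb; split; [apply: Psi_upd|apply: Y_upd].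
have indt : forall c bb, Psi b t d S s k (upd c t k bb) = Psi b t d S s k c /\ Y (upd c t k bb) = Y c.
  by apply: indPsi => // tS'; rewrite tS' in tS.
rewrite E1 E2.
rewrite Ex_factor //; last by move=> c bb; rewrite /PY (proj1 (indt c bb)) (proj2 (indt c bb)).
rewrite Ex_factor //; last by move=> c bb; rewrite /PN (proj1 (indt c bb)) (proj2 (indt c bb)).
rewrite (@Ex_factor _ p _ _ (fun c => PN c * Z c) t k (fun x : bool => (x%:R : R))) //; last first.
  move=> c bb; rewrite /PN (proj1 (indt c bb)) (proj2 (indt c bb)) /Z; congr (_ * _).
  rewrite big_seq_cond [in RHS]big_seq_cond; apply: eq_bigr => u /andP [uS _].
  rewrite wbit_upd //; apply/orP; left; apply: contraNneq tS => <-; by rewrite -mem_enum.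
rewrite /Z (@Ex_prod _ _ _ _ _ _ (fun u => k - s u)%N (fun u => s u <= k)%N (fun u x => (~~ x)%:R)).
- set Rr := \prod_(u <- enum S) _.
  have hR : (1 - p) ^+ #|S| <= Rr.
    rewrite /Rr big_enum -prodr_const; apply: ler_prod => u _.
    case: (s u <= k)%N => /=; rewrite ?mulr0 ?mulr1 ?add0r; lra.
  have hA : 0 <= Ex p PY.
    apply: Ex_ge0 => // c; apply: mulr_ge0; last by case: (Y c).
    apply: mulr_ge0; first by case: (Evk _ _ _ _ _ _).
    apply: prodr_ge0 => i _; rewrite /wgt; case: (c t i) => //; lra.
  have hB : 0 <= Ex p PN.
    apply: Ex_ge0 => // c; apply: mulr_ge0; last by case: (Y c).
    apply: mulr_ge0; first by case: (Evk _ _ _ _ _ _).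
    apply: prodr_ge0 => i _; rewrite /wgt; case: (c t i) => //; lra.
  rewrite /wgt /= mulr1 mulr0 addr0.
  have hp0 : 0 <= p by case/andP: hp.
  have : Ex p PN * (b * p * (1 - p) ^+ #|S|) <= Ex p PN * (b * p * Rr).
    by apply: ler_wpM2l => //; apply: ler_wpM2l => //; apply: mulr_ge0.
  have : Ex p PY * (p * b + (1 - p)) <= Ex p PY * (lam * b) by apply: ler_wpM2l.
  have : Ex p PN * (p * b + (1 - p) - b * p * (1 - p) ^+ #|S|) <= Ex p PN * lam by apply: ler_wpM2l.
  move: hA hB; set A := Ex p PY; set B := Ex p PN; set r := (1 - p) ^+ #|S|.
  move=> *; nra.
- exact: enum_uniq.
- move=> u _ _; have := ltn_ord k; lia.
- move=> u; rewrite mem_enum => uS hsu c bb.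
  have Hv : u = t -> (k <= k - s u)%N by move=> ut; rewrite -ut uS in tS.
  have Hs : u \in S -> (k <= k - s u + s u)%N by move=> _; lia.
  have [e1 e2] := indPsi u (k - s u)%N Hv Hs c bb.
  by rewrite /PN e1 e2.
Qed.

Definition Ev T n (t : 'I_T) (d : nat) (S : {set 'I_T}) (s : {ffun 'I_T -> 'I_n}) (c : config T n) :=
  [forall j : 'I_n, good t d S s c j].

Lemma iter_bound (R : realType) (p b lam : R) T n (t : 'I_T) d (S : {set 'I_T}) (s : {ffun 'I_T -> 'I_n}) :
  0 <= p <= 1 -> 1 <= b -> 0 <= lam -> (0 < d)%N -> t \notin S ->
  p * b + (1 - p) <= lam * b -> p * b + (1 - p) - b * p * (1 - p) ^+ #|S| <= lam ->
  Ex p (fun c => ((Ev t d S s c)%:R : R)) <= lam ^+ n.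
Proof.
move=> hp b1 lam0 d0 tS h1 h2.
have b0 : 0 <= b by lra.
have H : forall k, (k <= n)%N -> Ex p (Phi b t d S s k) <= lam ^+ k.
  elim=> [|k IH] hk.
    rewrite expr0 -(Ex1 p T n); apply: Ex_le => // c.
    rewrite /Phi big_pred0 ?mulr1; last by move=> i.
    by have -> : Evk t d S s 0 c by apply/forallP => j.
  have := step s (Ordinal hk) hp b0 d0 tS h1 h2 => /= /le_trans; apply.
  by rewrite exprS; apply: ler_wpM2l => //; apply: IH; apply: ltnW.
apply: le_trans (H n (leqnn n)); apply: Ex_le => // c.
rewrite /Phi; have -> : Evk t d S s n c = Ev t d S s c.
  by apply: eq_forallb => j; rewrite ltn_ord.
case: (Ev t d S s c); last by rewrite mul0r.
rewrite mul1r; apply: (big_ind (fun x => 1 <= x)) => //.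
  by move=> x y hx hy; nra.
by move=> i _; rewrite /wgt; case: (c t i).
Qed.

Lemma consts (R : realType) (p r : R) : 0 < p -> p <= 1 / 2 -> 0 <= r <= 1 ->
  let q := p * (1 - p) * r in let b := (1 - p) / (1 - p - q) in
  [/\ 1 <= b, 0 <= 1 - q, p * b + (1 - p) <= (1 - q) * b &
      p * b + (1 - p) - b * p * r <= 1 - q].
Proof.
move=> p0 p2 /andP [r0 r1] q b.
have hq0 : 0 <= q by rewrite /q; apply: mulr_ge0 => //; apply: mulr_ge0; lra.
have hq1 : q <= p * (1 - p) by rewrite /q; rewrite -[X in _ <= X]mulr1; apply: ler_wpM2l => //; apply: mulr_ge0; lra.
have hD : 0 < 1 - p - q by nra.
have hb : b * (1 - p - q) = 1 - p by rewrite /b divfK // gt_eqF.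
have b1 : 1 <= b by nra.
split => //; first nra; first nra.
have e : (p - q) * (1 - p - q) - (1 - p) * p * (1 - r) = q ^+ 2 by rewrite /q; ring.
have : b * p * (1 - r) * (1 - p - q) <= (p - q) * (1 - p - q).
  have -> : b * p * (1 - r) * (1 - p - q) = (1 - p) * p * (1 - r) by transitivity (b * (1 - p - q) * (p * (1 - r))); [ring | rewrite hb; ring].
  have : 0 <= q ^+ 2 by apply: sqr_ge0.
  lra.
rewrite ler_pM2r // => h; lra.
Qed.
Lemma pow_exp_bound (R : realType) (M : nat) : (1 <= M)%N ->
  expR (-1) <= (1 - (M.+1)%:R^-1) ^+ M :> R.
Proof.
move=> M1; set m : R := M%:R.
have m0 : 0 < m by rewrite /m ltr0n.
have hS : (M.+1)%:R = m + 1 :> R by rewrite -addn1 natrD.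
rewrite hS.
have e1 : expR (- (1 / m)) * expR (1 / m) = 1 by rewrite mulrC expRxMexpNx_1.
have f : 1 + 1 / m <= expR (1 / m) by apply: expR_ge1Dx.
have g : expR (- (1 / m)) * (1 + 1 / m) <= 1.
  by have := ler_wpM2l (expR_ge0 (- (1 / m))) f; rewrite e1.
have h : (1 - (m + 1)^-1) * (1 + 1 / m) = 1 by field; apply/andP; split; lra.
have k : expR (- (1 / m)) <= 1 - (m + 1)^-1.
  have q0 : 0 < 1 / m by apply: divr_gt0; lra.
  have hpos : 0 < 1 + 1 / m by lra.
  by rewrite -(ler_pM2r hpos) h.
have -> : -1 = M%:R * (- (1 / m)) :> R by rewrite -/m; field; lra.
rewrite expRM_natl; apply: lerXn2r => //; rewrite nnegrE //.
  exact: expR_ge0.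
apply: le_trans k; exact: expR_ge0.
Qed.

Lemma final_real (R : realType) (M T n N : nat) : (1 <= M)%N -> (1 <= T)%N -> (1 <= n)%N ->
  (N <= T ^ M * n ^ M)%N ->
  let p : R := (M.+1)%:R^-1 in let q := p * (1 - p) * (1 - p) ^+ M.-1 in 0 <= 1 - q ->
  N%:R * (1 - q) ^+ n <=
    expR (M%:R * ln (T%:R) + M%:R * ln (n%:R) - n%:R / (M.+1)%:R * expR (-1)).
Proof.
move=> M1 T1 n1 hN p q q1.
have hq : q = p * (1 - p) ^+ M.
  by rewrite /q -mulrA -exprS prednK.
have p0 : 0 < p by rewrite /p invr_gt0 ltr0n.
have hqe : p * expR (-1) <= q by rewrite hq; apply: ler_wpM2l; [lra|exact: pow_exp_bound].
have -> : M%:R * ln (T%:R) + M%:R * ln (n%:R) - n%:R / (M.+1)%:R * expR (-1) =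
   M%:R * ln (T%:R) + M%:R * ln (n%:R) + n%:R * (- (p * expR (-1))) :> R by rewrite /p; ring.
rewrite !expRD !expRM_natl !lnK ?posrE ?ltr0n //.
apply: ler_pM.
- by rewrite ler0n.
- by apply: exprn_ge0.
- by rewrite -!natrX -natrM ler_nat.
apply: lerXn2r; rewrite ?nnegrE //; first exact: expR_ge0.
apply: le_trans (expR_ge1Dx (- q)) _; rewrite ?ler_expR; lra.
Qed.

Lemma ffact_le_exp T k : (T ^_ k <= T ^ k)%N.
Proof.
elim: k => [|k IH]; first by [].
by rewrite ffactnSr expnSr; apply: leq_mul => //; apply: leq_subr.
Qed.

Lemma bin_le_exp T k : ('C(T, k) <= T ^ k)%N.
Proof.
apply: leq_trans (ffact_le_exp T k); rewrite -bin_ffact; apply: leq_pmulr.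
exact: fact_gt0.
Qed.

Lemma count_le M T n : (1 <= M)%N ->
  (T * (n * ('C(T, M.-1) * n ^ M.-1)) <= T ^ M * n ^ M)%N.
Proof.
move=> M1; have hM : M = M.-1.+1 by rewrite prednK.
rewrite [in X in (_ <= X)%N]hM !expnS.
have := bin_le_exp T M.-1.
move: ('C(T, M.-1))%N (T ^ M.-1)%N (n ^ M.-1)%N => a b e h.
have e1 : (T * (n * (a * e)) = a * (T * n * e))%N by ring.
have e2 : (T * b * (n * e) = b * (T * n * e))%N by ring.
by rewrite e1 e2; apply: leq_mul.
Qed.

Lemma sum_ind (R : realType) (I : finType) (A : {pred I}) : \sum_(i : I) ((i \in A)%:R : R) = #|A|%:R.
Proof.
rewrite (eq_bigr (fun i => if i \in A then 1 else 0)); last by move=> i _; case: (i \in A).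
by rewrite -big_mkcond sumr_const.
Qed.

Lemma le_sum_term (R : realType) (I : finType) (F : I -> R) i : (forall j, 0 <= F j) -> F i <= \sum_j F j.
Proof. by move=> h; rewrite (bigD1 i) //= lerDl sumr_ge0. Qed.

Lemma Ex_sum (R : realType) (p : R) T n (I : finType) (F : I -> config T n -> R) :
  Ex p (fun c => \sum_(i : I) F i c) = \sum_(i : I) Ex p (F i).
Proof. by rewrite /Ex; under eq_bigr do rewrite mulr_sumr; rewrite exchange_big. Qed.

Unset Implicit Arguments.

Theorem mainTheorem6 (R : realType) (M T n : nat) :
  (1 <= M)%N -> (M <= T)%N -> (2 <= n)%N ->
  let p : R := (M.+1)%:R^-1 in
  Prob p (@Esyn M T n) <=
    expR (M%:R * ln (T%:R) + M%:R * ln (n%:R) - n%:R / (M.+1)%:R * expR (-1)).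
Proof.
move=> M1 MT n2; cbv zeta; set p : R := (M.+1)%:R^-1.
have T1 : (1 <= T)%N by lia.
have n0 : (0 < n)%N by lia.
pose i0 : 'I_n := Ordinal n0.
have hpM : p * (M.+1)%:R = 1 by rewrite /p mulVf // pnatr_eq0.
have hM2 : 2%:R <= (M.+1)%:R :> R by rewrite ler_nat; lia.
have p0 : 0 < p by rewrite /p invr_gt0 ltr0n.
have p2 : p <= 1 / 2 by nra.
have hp : 0 <= p <= 1 by apply/andP; split; lra.
set r := (1 - p) ^+ M.-1.
have r01 : 0 <= r <= 1.
  by apply/andP; split; [apply: exprn_ge0; lra | apply: exprn_ile1; lra].
have := consts p0 p2 r01 => /= [[b1 lam0 h1 h2]].
set q := p * (1 - p) * r in b1 lam0 h1 h2.
set b := (1 - p) / (1 - p - q) in b1 lam0 h1 h2.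
have hev : forall (t : 'I_T) (d : 'I_n) (S : {set 'I_T}) (s : {ffun 'I_T -> 'I_n}), (0 < d)%N -> t \notin S -> #|S| = M.-1 ->
    Ex p (fun c => ((Ev t d S s c)%:R : R)) <= (1 - q) ^+ n.
  move=> t d S s d0 tS hS; apply: iter_bound b1 lam0 d0 tS h1 _ => //; by rewrite hS.
have := final_real (R:=R) (N := (T * (n * ('C(T, M.-1) * n ^ M.-1)))%N) M1 T1 n0 (@count_le M T n M1).
move=> /(_ lam0) F; apply: le_trans F.
rewrite /Prob (_ : \sum_(c | Esyn M c) cweight p c = Ex p (fun c => ((@Esyn M T n c)%:R : R))); last first.
  by rewrite /Ex big_mkcond; apply: eq_bigr => c _; case: (Esyn _ _); rewrite ?mulr1 ?mulr0.
pose cond (t : 'I_T) (d : 'I_n) (S : {set 'I_T}) (s : {ffun 'I_T -> 'I_n}) :=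
  [&& (0 < d)%N, t \notin S, #|S| == M.-1 & s \in pffun_on i0 S predT].
apply: (@le_trans _ _ (Ex p (fun c => \sum_(t : 'I_T) \sum_(d : 'I_n) \sum_(S : {set 'I_T})
    \sum_(s : {ffun 'I_T -> 'I_n}) ((cond t d S s)%:R * ((Ev t d S s c)%:R : R))))).
  apply: Ex_le => // c.
  have g0 : forall t d S s, 0 <= ((cond t d S s)%:R * ((Ev t d S s c)%:R : R)).
    by move=> t d S s; apply: mulr_ge0; apply: ler0n.
  case E: (Esyn M c); last by do 4!(apply: sumr_ge0 => ? _).
  move: E => /existsP [t /existsP [d /existsP [S /existsP [s /and4P [d0 tS hS hall]]]]].
  pose s' := [ffun u => if u \in S then s u else i0].
  have hc : cond t d S s'.
    rewrite /cond d0 tS hS /=; apply/pffun_onP; split.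
      by apply/supportP => u uS; rewrite ffunE (negbTE uS).
    by move=> x _.
  have he : Ev t d S s' c.
    apply/forallP => j; have := forallP hall j; rewrite /good.
    congr (_ ==> (_ || _)); apply: eq_existsb => u; case uS: (u \in S) => //=.
    by rewrite ffunE uS.
  apply: le_trans (le_sum_term t _) => /=; last by move=> t'; do 3!(apply: sumr_ge0 => ? _).
  apply: le_trans (le_sum_term d _) => /=; last by move=> d'; do 2!(apply: sumr_ge0 => ? _).
  apply: le_trans (le_sum_term S _) => /=; last by move=> S'; apply: sumr_ge0 => ? _.
  apply: le_trans (le_sum_term s' _) => //=.
  by rewrite hc he mulr1.
set L := (1 - q) ^+ n.
have L0 : 0 <= L by apply: exprn_ge0.
rewrite Ex_sum.
apply: (@le_trans _ _ (\sum_(t : 'I_T) (n * ('C(T, M.-1) * n ^ M.-1))%:R * L)).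
  apply: ler_sum => t _; rewrite Ex_sum.
  apply: (@le_trans _ _ (\sum_(d : 'I_n) ('C(T, M.-1) * n ^ M.-1)%:R * L)).
    apply: ler_sum => d _; rewrite Ex_sum.
    apply: (@le_trans _ _ (\sum_(S : {set 'I_T}) ((S \in [set S0 : {set 'I_T} | #|S0| == M.-1])%:R * (n ^ M.-1)%:R * L))).
      apply: ler_sum => S _; rewrite Ex_sum.
      apply: (@le_trans _ _ (\sum_(s : {ffun 'I_T -> 'I_n}) ((s \in pffun_on i0 S predT)%:R * (#|S| == M.-1)%:R * L))).
        apply: ler_sum => s _.
        rewrite (@Ex_ext _ p _ _ _ (fun c => (Ev t d S s c)%:R * (cond t d S s)%:R)); last by move=> c; rewrite mulrC.
        rewrite Ex_scal.
        case hc: (cond t d S s).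
          move: hc; rewrite /cond => /and4P [d0 tS /eqP hS hs].
          by rewrite hs hS eqxx !mul1r mulr1; apply: hev.
        rewrite mulr0; apply: mulr_ge0 => //; apply: mulr_ge0; apply: ler0n.
      rewrite -!mulr_suml sum_ind card_pffun_on card_ord.
      rewrite in_set; case: eqP => [->|_]; first by rewrite mulr1 mul1r.
      by rewrite !mulr0 !mul0r.
    by rewrite -!mulr_suml sum_ind card_draws card_ord natrM.
  by rewrite -mulr_suml sumr_const card_ord [in X in _ <= X]natrM mulr_natl.
by rewrite -mulr_suml sumr_const card_ord [in X in _ <= X]natrM mulr_natl.
Qed.
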